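(* For every $n \geqslant 2$ there exists a direction-determinate 2DFA with $n$ states which accepts at least one string and whose shortest accepted string has length exactly $\binom{n}{\lfloor n/2 \rfloor} - 1$.
   Context: A two-way deterministic finite automaton (2DFA) is a quintuple $(\Sigma, Q, q_0, \delta, F)$ where $\Sigma$ is a finite alphabet not containing the end-markers $\vdash$ and $\dashv$, $Q$ is a finite set of states, $q_0 \in Q$ is the initial state, $\delta: Q \times (\Sigma \cup \{\vdash, \dashv\}) \to Q \times \{-1,+1\}$ is a partial transition function, and $F \subseteq Q$ is the set of accepting states. On input $w = a_1 \cdots a_m \in \Sigma^*$ the automaton works on the tape $\vdash a_1 \cdots a_m \dashv$, starting at $\vdash$ in state $q_0$; in state $q$ reading symbol $c$, if $\delta(q,c) = (r,d)$ it enters state $r$ and moves one cell in direction $d$ ($-1$ left, $+1$ right); if $\delta(q,c)$ is undefined it rejects. It accepts $w$ if it ever arrives at $\dashv$ in a state from $F$; it may also loop forever (not accepting). The number of states of the automaton is $|Q|$. A 2DFA is direction-determinate if there is a partition $Q = Q^+ \cup Q^-$, $Q^+ \cap Q^- = \emptyset$, such that every transition $\delta(q,c) = (r,+1)$ has $r \in Q^+$ and every transition $\delta(q,c) = (r,-1)$ has $r \in Q^-$. *)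

(* Defs.v *)
From mathcomp Require Import all_boot.
Set Implicit Arguments. Unset Strict Implicit. Unset Printing Implicit Defensive.

Inductive sym (Sigma : Type) : Type :=
  | LEnd : sym Sigma
  | REnd : sym Sigma
  | Letter : Sigma -> sym Sigma.
Arguments LEnd {Sigma}. Arguments REnd {Sigma}.

(* A 2DFA over alphabet Sigma with state set Q.  Directions: true = +1, false = -1.
   delta is partial (None = undefined, i.e. reject). *)
Record dfa2 (Sigma : finType) (Q : finType) := DFA2 {
  init : Q;
  delta : Q -> sym Sigma -> option (Q * bool);
  final : pred Q
}.

Section Run.
Variables (Sigma Q : finType) (A : dfa2 Sigma Q).

Definition tape (w : seq Sigma) (i : nat) : option (sym Sigma) :=
  if i == 0 then Some LEnd
  else if i == (size w).+1 then Some REnd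
  else omap (@Letter Sigma) (onth w i.-1).

Definition step (w : seq Sigma) (c : Q * nat) : option (Q * nat) :=
  let: (q, i) := c in
  match tape w i with
  | None => None
  | Some s =>
    match delta A q s with
    | None => None
    | Some (r, d) => if d then Some (r, i.+1)
                     else if i == 0 then None else Some (r, i.-1)
    end
  end.

Fixpoint run (w : seq Sigma) (k : nat) : option (Q * nat) :=
  match k with
  | 0 => Some (init A, 0)
  | k.+1 => obind (step w) (run w k)
  end.

Definition accepts (w : seq Sigma) : Prop :=
  exists k q, run w k = Some (q, (size w).+1) /\ q \in final A.

End Run.

(* Direction-determinate: a partition Q = Q+ (P) ∪ Q- (~~ P) such that every
   right move enters Q+ and every left move enters Q-. *)
Definition direction_determinate (Sigma Q : finType) (A : dfa2 Sigma Q) : Prop :=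
  exists P : pred Q, forall q s r d, delta A q s = Some (r, d) -> P r = d.

(* Main.v *)
Require Import Defs.
From mathcomp Require Import all_boot.
From mathcomp Require Import zify.
Set Implicit Arguments. Unset Strict Implicit. Unset Printing Implicit Defensive.

Fixpoint lexle (s t : seq nat) : bool :=
  match s, t with
  | [::], _ => true
  | _ :: _, [::] => false
  | x :: s', y :: t' => (x < y) || ((x == y) && lexle s' t')
  end.

Lemma lexle_refl s : lexle s s.
Proof. by elim: s => //= x s ->; rewrite eqxx orbT. Qed.

Lemma lexle_trans s t u : lexle s t -> lexle t u -> lexle s u.
Proof.
elim: s t u => [|x s IH] [|y t] [|z u] //=.
case/orP=> [xy|/andP[/eqP-> st]]; case/orP=> [yz|/andP[/eqP<- tu]].
- by rewrite (ltn_trans xy yz).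
- by rewrite xy.
- by rewrite yz.
- by rewrite eqxx (IH _ _ st tu) orbT.
Qed.

Lemma lexle_total s t : lexle s t || lexle t s.
Proof.
elim: s t => [|x s IH] [|y t] //=.
case: (ltngtP x y) => //= ->; rewrite ?eqxx /= ?IH //.
Qed.

Lemma lexle_anti s t : lexle s t -> lexle t s -> s = t.
Proof.
elim: s t => [|x s IH] [|y t] //=.
case: (ltngtP x y) => //= -> /= st ts; by rewrite (IH _ st ts).
Qed.

Fixpoint ilv {T : Type} (s t : seq T) : seq T :=
  match s, t with
  | x :: s', y :: t' => x :: y :: ilv s' t'
  | x :: _, [::] => [:: x]
  | [::], _ => [::]
  end.

Lemma map_ilv (T U : Type) (f : T -> U) s t :
  map f (ilv s t) = ilv (map f s) (map f t).
Proof. by elim: s t => [|x s IH] [|y t] //=; rewrite IH. Qed.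

Lemma ilv_inj (T : Type) (A B A' B' : seq T) :
  size A = (size B).+1 -> size A' = (size B').+1 -> ilv A B = ilv A' B' ->
  A = A' /\ B = B'.
Proof.
elim: B A A' B' => [|b B IH] [|a A] [|a' A'] [|b' B'] //=.
- by move=> sA sA' [<-]; case: A sA => // _; case: A' sA'.
- by move=> [sA] [sA'] [-> -> e]; have [-> ->] := IH _ _ _ sA sA' e.
Qed.

(* F_L : deleting (a_i,b_i) pairs increases the key *)
Lemma FL (A B : seq nat) (bs : seq bool) :
  sorted ltn A -> sorted (fun x y => y < x) B -> size A = (size B).+1 ->
  size bs = size B ->
  lexle (ilv A B) (ilv (mask (rcons bs true) A) (mask bs B)).
Proof.
elim: B A bs => [|b B IH] [|a A] [|c bs] //=.
- by move=> *; rewrite eqxx ltnn.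
move=> sA sB [eA] [ebs].
have sA' : sorted ltn A by apply: (path_sorted sA).
have sB' : sorted (fun x y => y < x) B by apply: (path_sorted sB).
case: c => /=.
  by rewrite !eqxx /= !ltnn /= IH.
case: A sA sA' eA => [|a2 A] //= sA sA' eA.
set M := mask (rcons bs true) (a2 :: A).
have : M != [::].
  rewrite /M -size_eq0 size_mask ?size_rcons /= ?eA ?ebs //.
  by rewrite -cats1 count_cat /= addn1.
case EM: M => [|m M'] // _.
have mA : m \in a2 :: A.
  by apply: (mem_mask (m:=rcons bs true)); rewrite -/M EM inE eqxx.
have am : a < m.
  move: sA => /andP[aa2 pA].
  rewrite inE in mA; case/orP: mA => [/eqP->//|mA].
  have := order_path_min ltn_trans pA.
  move/allP/(_ _ mA) => a2m; exact: ltn_trans aa2 a2m.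
by case: (mask bs B) => [|y Y] /=; rewrite am.
Qed.

Lemma FR (a : nat) (A B : seq nat) (bs : seq bool) :
  sorted ltn (a :: A) -> sorted (fun x y => y < x) B -> size A = size B ->
  size bs = size B ->
  lexle (ilv (a :: mask bs A) (mask bs B)) (ilv (a :: A) B).
Proof.
elim: B a A bs => [|b B IH] a [|a2 A] [|c bs] //=.
- by move=> *; rewrite eqxx ltnn.
move=> /andP[aa2 sA] sB [eA] [ebs].
have sB' : sorted (fun x y => y < x) B by apply: (path_sorted sB).
case: c => /=.
  rewrite !eqxx !ltnn /=.
  exact: (IH a2 A bs sA sB' eA ebs).
case EM: (mask bs B) => [|y Y] /=; rewrite eqxx ltnn //=.
have yB : y \in B by apply: (mem_mask (m:=bs)); rewrite EM inE eqxx.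
have tr : transitive (fun x y : nat => y < x) by move=> ? ? ? h1 h2; exact: ltn_trans h2 h1.
have := order_path_min tr sB.
by move/allP/(_ _ yB) => ->.
Qed.

Lemma size_filter_enum n (P : pred 'I_n) :
  size [seq x <- enum 'I_n | P x] = #|[set x | P x]|.
Proof. by rewrite enumT cardsE cardE /enum_mem. Qed.

Lemma count_iota_lt n m : m <= n -> count (fun x => x < m) (iota 0 n) = m.
Proof.
move=> mn; rewrite -(subnKC mn) iotaD count_cat add0n.
rewrite (eq_in_count (a2:=predT)); last by move=> x; rewrite mem_iota.
rewrite count_predT size_iota (eq_in_count (a2:=pred0)) ?count_pred0 ?addn0 //.
by move=> x; rewrite mem_iota /= => /andP[/leq_gtF ->].
Qed.

Section Nodes.
Variable n : nat.
Hypothesis hn : 1 < n.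

Definition hh := n./2.

Lemma hh_lt_n : hh < n.
Proof. rewrite /hh ltn_half_double -addnn; lia. Qed.

Definition plus (x : 'I_n) : bool := x <= hh.
Definition As (p : pred 'I_n) : seq 'I_n := [seq x <- enum 'I_n | plus x && p x].
Definition Bs (p : pred 'I_n) : seq 'I_n := rev [seq x <- enum 'I_n | ~~ plus x && p x].
Definition AT (T : {set 'I_n}) := As (fun x => x \notin T).
Definition BT (T : {set 'I_n}) := Bs (fun x => x \in T).
Definition keyP (p q : pred 'I_n) : seq nat := map val (ilv (As p) (Bs q)).
Definition keyT (T : {set 'I_n}) := map val (ilv (AT T) (BT T)).
Definition node (T : {set 'I_n}) := #|T| == hh.
Definition Phi (s : seq nat) := #|[set T : {set 'I_n} | node T && ~~ lexle s (keyT T)]|.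

Lemma mem_As p x : (x \in As p) = plus x && p x.
Proof. by rewrite mem_filter mem_enum andbT. Qed.
Lemma mem_Bs p x : (x \in Bs p) = ~~ plus x && p x.
Proof. by rewrite mem_rev mem_filter mem_enum andbT. Qed.
Lemma uniq_As p : uniq (As p).
Proof. by rewrite filter_uniq ?enum_uniq. Qed.
Lemma uniq_Bs p : uniq (Bs p).
Proof. by rewrite rev_uniq filter_uniq ?enum_uniq. Qed.

Lemma sorted_enum_ord : sorted (relpre val ltn) (enum 'I_n).
Proof. by rewrite -sorted_map val_enum_ord iota_ltn_sorted. Qed.

Lemma sorted_As p : sorted ltn (map val (As p)).
Proof.
rewrite sorted_map; apply: sorted_filter sorted_enum_ord.
by move=> ? ? ? /= ; apply: ltn_trans.
Qed.

Lemma sorted_Bs p : sorted (fun x y => y < x) (map val (Bs p)).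
Proof.
rewrite map_rev rev_sorted sorted_map; apply: sorted_filter sorted_enum_ord.
by move=> ? ? ? /= ; apply: ltn_trans.
Qed.

Definition Pl := [set x : 'I_n | plus x].

Lemma card_Pl : #|Pl| = hh.+1.
Proof.
rewrite -size_filter_enum size_filter -(count_map val (fun v => v < hh.+1)).
by rewrite val_enum_ord count_iota_lt // hh_lt_n.
Qed.

Lemma size_AT T : size (AT T) = #|Pl :\: T|.
Proof. by rewrite size_filter_enum; apply: eq_card => x; rewrite !inE andbC. Qed.
Lemma size_BT T : size (BT T) = #|T :\: Pl|.
Proof. by rewrite size_rev size_filter_enum; apply: eq_card => x; rewrite !inE. Qed.

Lemma size_ATBT T : node T -> size (AT T) = (size (BT T)).+1.
Proof.
move=> /eqP nT; rewrite size_AT size_BT.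
have h1 : #|T :&: Pl| + #|T :\: Pl| = hh by rewrite cardsID.
have h2 : #|T :&: Pl| + #|Pl :\: T| = hh.+1 by rewrite setIC cardsID card_Pl.
lia.
Qed.

End Nodes.

Section Nodes2.
Variable n : nat.
Hypothesis hn : 1 < n.
Local Notation hh := (hh n).
Local Notation plus := (@plus n).
Local Notation keyT := (@keyT n).
Local Notation node := (@node n).
Local Notation Phi := (@Phi n).
Local Notation AT := (@AT n).
Local Notation BT := (@BT n).
Local Notation Pl := (@Pl n).
Local Notation size_ATBT := (size_ATBT hn).
Local Notation card_Pl := (card_Pl hn).

Lemma keyT_inj T T' : node T -> node T' -> keyT T = keyT T' -> T = T'.
Proof.
move=> nT nT' /(inj_map val_inj) e.
have [eA eB] := ilv_inj (size_ATBT nT) (size_ATBT nT') e.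
apply/setP => x.
have := congr1 (fun s => x \in s) eA; have := congr1 (fun s => x \in s) eB.
rewrite /AT /BT !mem_As !mem_Bs.
by case: (plus x) => /= [_ /negb_inj | ->].
Qed.

Lemma Phi_mono s t : lexle s t -> Phi s <= Phi t.
Proof.
move=> st; apply: subset_leq_card; apply/subsetP => T; rewrite !inE.
case/andP=> -> h /=; apply: contra h => h'; exact: lexle_trans st h'.
Qed.

Definition Cn := #|[set T : {set 'I_n} | node T]|.

Lemma card_nodes : Cn = 'C(n, hh).
Proof. by rewrite /Cn /node card_draws card_ord. Qed.

Lemma Phi_lt T : node T -> Phi (keyT T) < Cn.
Proof.
move=> nT.
have : Phi (keyT T) <= #|[set T : {set 'I_n} | node T] :\ T|.
  apply: subset_leq_card; apply/subsetP => U; rewrite !inE.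
  case/andP=> -> h; rewrite andbT; apply: contraNneq h => ->.
  by rewrite lexle_refl.
move=> h1; have h2 := cardsD1 T [set T0 : {set 'I_n} | node T0].
rewrite inE nT in h2; rewrite /Cn h2; lia.
Qed.

Lemma Phi_lt_key T s : node T -> ~~ lexle s (keyT T) -> Phi (keyT T) < Phi s.
Proof.
move=> nT ns; apply: proper_card; apply/properP; split.
  apply/subsetP => U; rewrite !inE; case/andP=> -> h /=; apply: contra h => h'.
  have : lexle (keyT T) s by move: (lexle_total s (keyT T)); rewrite (negbTE ns).
  by move/lexle_trans; apply.
by exists T; rewrite !inE nT // lexle_refl.
Qed.

Lemma Phi_inj T T' : node T -> node T' -> Phi (keyT T) = Phi (keyT T') -> T = T'.
Proof.
move=> nT nT' e; apply: keyT_inj => //.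
case/orP: (lexle_total (keyT T) (keyT T')) => le.
  case: (boolP (lexle (keyT T') (keyT T))) => [le' | nle]; first exact: lexle_anti.
  by have := Phi_lt_key nT nle; rewrite e ltnn.
case: (boolP (lexle (keyT T) (keyT T'))) => [le' | nle]; first exact: lexle_anti.
by have := Phi_lt_key nT' nle; rewrite e ltnn.
Qed.

Definition Sing (a : 'I_n) := Pl :\ a.

Lemma node_Sing a : plus a -> node (Sing a).
Proof.
move=> pa; rewrite /node /Sing.
have := cardsD1 a Pl; rewrite card_Pl inE pa add1n => -[] ->.
by [].
Qed.

Lemma AT_Sing a : plus a -> AT (Sing a) = [:: a].
Proof.
move=> pa.
  rewrite /AT /As -(filter_pred1_uniq (enum_uniq 'I_n) (mem_enum _ a)).
  apply: eq_filter => x /=; rewrite !inE negb_and negbK.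
  by case: (eqVneq x a) => [->|] //=; [rewrite pa | rewrite andbN].
Qed.

Lemma keyT_Sing a : plus a -> keyT (Sing a) = [:: val a].
Proof.
move=> pa; rewrite /keyT.
have -> : AT (Sing a) = [:: a] by exact: AT_Sing.
have -> : BT (Sing a) = [::].
  rewrite /BT /Bs (eq_filter (a2 := pred0)) ?filter_pred0 // => x /=.
  by rewrite !inE; case: (plus x); rewrite ?andbF.
by [].
Qed.

Definition hst : 'I_n := Ordinal (hh_lt_n hn).

Lemma plus_hst : plus hst.
Proof. by rewrite /plus /=. Qed.

Lemma keyT_cons T d : node T -> exists r, keyT T = val (head d (AT T)) :: r.
Proof.
move=> nT; have := size_ATBT nT; rewrite /keyT.
case: (AT T) => [|a A] //= _.
by case: (BT T) => [|b B] /=; eexists.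
Qed.

Lemma top_key T : node T -> lexle [:: hh] (keyT T) -> T = Sing hst.
Proof.
move=> nT le; apply: keyT_inj => //; first by apply: node_Sing; exact: plus_hst.
rewrite keyT_Sing ?plus_hst //=.
have sz := size_ATBT nT.
have sA := sorted_As (fun x : 'I_n => x \notin T).
have mA : forall x, x \in AT T -> x <= hh.
  by move=> x; rewrite /AT mem_As /plus => /andP[].
move: le sz sA mA; rewrite /keyT -/(AT T) -/(BT T).
case: (AT T) => [|a [|a2 A]] //=.
- case: (BT T) => [|b B] //= le _ _ mA.
  have := mA a; rewrite inE eqxx => /(_ isT) ale.
  by move: le; rewrite ltnNge ale /= andbT => /eqP <-.
- move=> le _ /andP[aa2 _] mA.
  have := mA a; rewrite inE eqxx => /(_ isT) ale.
  have := mA a2; rewrite !inE eqxx orbT => /(_ isT) a2le.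
  exfalso; move: le; case: (BT T) => [|b B] /=;
  rewrite ltnNge ale /= => /andP[/eqP ea _]; rewrite -ea in aa2; lia.
Qed.

Definition nodeAt j := odflt set0 [pick T : {set 'I_n} | node T && (Phi (keyT T) == j)].

Lemma nodeAtP j : j < Cn -> node (nodeAt j) /\ Phi (keyT (nodeAt j)) = j.
Proof.
move=> jC.
set s1 := map (fun T => Phi (keyT T)) (enum [set T : {set 'I_n} | node T]).
have u1 : uniq s1.
  rewrite map_inj_in_uniq ?enum_uniq // => T U.
  by rewrite !mem_enum !inE; apply: Phi_inj.
have sub : {subset s1 <= iota 0 Cn}.
  move=> x /mapP[T]; rewrite mem_enum inE => nT ->.
  by rewrite mem_iota add0n Phi_lt.
have sz : size (iota 0 Cn) <= size s1 by rewrite size_iota size_map /Cn cardE.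
have [_ e] := uniq_min_size u1 sub sz.
have : j \in s1 by rewrite e mem_iota.
case/mapP=> T; rewrite mem_enum inE => nT eT.
rewrite /nodeAt; case: pickP => [U /andP[nU /eqP eU] | /(_ T)] /=.
  by [].
by rewrite nT -eT eqxx.
Qed.

Lemma Phi_top : Cn.-1 <= Phi [:: hh].
Proof.
have sub : [set T : {set 'I_n} | node T] :\ Sing hst \subset
           [set T : {set 'I_n} | node T && ~~ lexle [:: hh] (keyT T)].
  apply/subsetP => T; rewrite !inE => /andP[nS nT]; rewrite nT /=.
  by apply: contra nS => le; rewrite (top_key nT le).
have h1 := subset_leq_card sub.
have h2 := cardsD1 (Sing hst) [set T : {set 'I_n} | node T].
rewrite /Phi /Cn h2; apply: leq_trans h1.
by case: (_ \in _) => /=; rewrite ?add1n ?add0n // leq_pred.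
Qed.

Lemma Cn_pos : 0 < Cn.
Proof. by rewrite card_nodes bin_gt0; exact: ltnW (hh_lt_n hn). Qed.

End Nodes2.

Section Runs.
Variables (Sigma Q : finType) (D : dfa2 Sigma Q) (P : pred Q).
Hypothesis DD : forall q s r d, delta D q s = Some (r, d) -> P r = d.
Hypothesis Pinit : P (init D).
Variable w : seq Sigma.

Lemma step_inv q i r j : step D w (q, i) = Some (r, j) ->
  exists sy, tape w i = Some sy /\ delta D q sy = Some (r, P r) /\
    j = (if P r then i.+1 else i.-1) /\ (P r || (0 < i)).
Proof.
rewrite /step; case: (tape w i) => // sy.
case E: (delta D q sy) => [[r' d]|] //.
have Pr := DD E.
case: d E Pr => E Pr.
  by case=> <- <-; exists sy; rewrite Pr.
case: (eqVneq i 0) => // i0 [<- <-]; exists sy; rewrite Pr; split => //.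
by rewrite lt0n i0.
Qed.

Lemma run_none t t' : run D w t = None -> t <= t' -> run D w t' = None.
Proof.
move=> h; elim: t' => [|t' IH]; first by rewrite leqn0 => /eqP e; rewrite -e.
rewrite leq_eqVlt => /orP[/eqP<-//|lt]; by rewrite /= IH.
Qed.

Lemma run_some t t' c : run D w t' = Some c -> t <= t' -> exists c0, run D w t = Some c0.
Proof.
move=> h le; case E: (run D w t) => [c0|]; first by exists c0.
by rewrite (run_none E le) in h.
Qed.

Lemma run_pred t r j : run D w t.+1 = Some (r, j) ->
  exists s i, run D w t = Some (s, i) /\ step D w (s, i) = Some (r, j).
Proof. by rewrite /=; case: (run D w t) => // [[s i]] /= h; exists s, i. Qed.

Variables (K : nat) (f : Q).
Hypothesis hK : run D w K = Some (f, (size w).+1).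

Definition vis q i := exists t, t <= K /\ run D w t = Some (q, i).

Lemma V1 q i : vis q i -> i <= size w ->
  exists sy r, tape w i = Some sy /\ delta D q sy = Some (r, P r) /\
    vis r (if P r then i.+1 else i.-1) /\ (P r || (0 < i)).
Proof.
move=> [t [tK ht]] iw.
have tK' : t < K.
  rewrite ltn_neqAle tK andbT; apply/eqP => e; rewrite e hK in ht.
  by case: ht => _ e'; rewrite -e' ltnn in iw.
have [c hc] := run_some hK tK'.
move: (hc); rewrite /= ht /= => hs.
case: c hc hs => r j hc hs.
have [sy [hsy [hd [hj hp]]]] := step_inv hs.
exists sy, r; split=> //; split=> //; split=> //.
by exists t.+1; rewrite -hj hc.
Qed.

Lemma V2 r j : vis r j -> (0 < j) || ~~ P r ->
  exists s sy, vis s (if P r then j.-1 else j.+1) /\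
    tape w (if P r then j.-1 else j.+1) = Some sy /\ delta D s sy = Some (r, P r).
Proof.
move=> [t [tK ht]] j0.
case: t tK ht => [|t] tK ht.
  by move: ht => /= [] er ej; move: j0; rewrite -ej -er Pinit.
have [s [i [hs hst]]] := run_pred ht.
have [sy [hsy [hd [hj hp]]]] := step_inv hst.
exists s, sy.
have ei : (if P r then j.-1 else j.+1) = i.
  rewrite hj; case: (P r) hp => //= hp; by rewrite prednK.
rewrite ei; split=> //; exists t; split=> //; exact: ltnW.
Qed.

Lemma tape_end : tape w (size w).+1 = Some REnd.
Proof. by rewrite /tape /= eqxx. Qed.

Lemma tape_0 : tape w 0 = Some LEnd.
Proof. by []. Qed.

Lemma tape_mid i : 0 < i <= size w -> tape w i = omap (@Letter Sigma) (onth w i.-1).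
Proof.
case: i => // i /= iw; rewrite /tape /=.
by rewrite eqSS (ltn_eqF iw).
Qed.

Lemma VEnd q : vis q (size w).+1 -> delta D q REnd = None -> q = f.
Proof.
move=> [t [tK ht]] hn.
case: (ltnP t K) => tK'.
  have [c hc] := run_some hK tK'.
  by move: hc; rewrite /= ht /= /step tape_end hn.
have e : t = K by apply/eqP; rewrite eqn_leq tK tK'.
by move: ht; rewrite e hK => -[].
Qed.

(* first entry into position i.+1 *)
Lemma FE i : 0 < i <= size w ->
  exists s r sy, tape w i = Some sy /\ vis s i /\ P s /\
    delta D s sy = Some (r, true) /\ vis r i.+1.
Proof.
move=> /andP[i0 iw].
pose pr t := (t <= K) && (if run D w t is Some (_, j) then i < j else false).
have ex : exists t, pr t by exists K; rewrite /pr leqnn hK; lia.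
case: (ex_minnP ex) => t1 /andP[t1K ht1] min1.
case E1: (run D w t1) ht1 => [[r j]|] // ij.
case: t1 E1 t1K min1 => [|t] E1 t1K min1.
  by move: E1 => /= [] _ ej; rewrite -ej in ij.
have [s [i0' [hs hst]]] := run_pred E1.
have [sy [hsy [hd [hj hp]]]] := step_inv hst.
have nt : ~~ pr t by apply/negP => /min1; rewrite ltnn.
have tK : t <= K by exact: ltnW.
move: nt; rewrite /pr tK hs /= -leqNgt => i0i.
have Pr : P r by move: hj ij i0i; case: (P r) => //= ->; lia.
rewrite Pr in hj hd.
have ei : i0' = i by lia.
rewrite ei in hs hsy hd.
exists s, r, sy; split=> //; split; first by exists t.
split; last first.
  split=> //; exists t.+1; split=> //; rewrite E1 hj ei //.
apply/negPn/negP => Ps.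
case: t E1 t1K min1 hs tK hst => [|t'] E1 t1K min1 hs tK hst.
  by move: hs => /= [] e _; rewrite -e Pinit in Ps.
have [s' [i' [hs' hst']]] := run_pred hs.
have [sy' [_ [_ [hj' hp']]]] := step_inv hst'.
rewrite (negbTE Ps) /= in hj' hp'.
have : pr t' by rewrite /pr hs' (ltnW tK) /=; lia.
by move/min1; lia.
Qed.

End Runs.

Section Auto.
Variable n : nat.
Hypothesis hn : 1 < n.
Local Notation hh := (hh n).
Local Notation plus := (@plus n).
Local Notation keyT := (@keyT n).
Local Notation keyP := (@keyP n).
Local Notation node := (@node n).
Local Notation Phi := (@Phi n).
Local Notation AT := (@AT n).
Local Notation BT := (@BT n).
Local Notation As := (@As n).
Local Notation Bs := (@Bs n).
Local Notation Pl := (@Pl n).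
Local Notation Cn := (@Cn n).
Local Notation size_ATBT := (size_ATBT hn).
Local Notation hst := (hst hn).
Local Notation nodeAt := (@nodeAt n).
Local Notation Sig := ({set 'I_n} * {set 'I_n})%type.

Definition delta0 (T T' : {set 'I_n}) (q : 'I_n) : option ('I_n * bool) :=
  if plus q then
    (if q \in AT T then
       (if index q (AT T) < size (BT T) then Some (nth q (BT T) (index q (AT T)), false)
        else Some (head q (AT T'), true))
     else None)
  else (if q \in BT T' then Some (nth q (AT T') (index q (BT T')).+1, true) else None).

Definition good (T T' : {set 'I_n}) :=
  node T && node T' && (Phi (keyT T') <= (Phi (keyT T)).+1).

Definition x0 : 'I_n := head hst (AT (nodeAt 0)).

Definition dlt (q : 'I_n) (s : sym Sig) : option ('I_n * bool) :=
  match s with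
  | LEnd => if q == x0 then Some (x0, true) else None
  | REnd => None
  | Letter c => if good c.1 c.2 then delta0 c.1 c.2 q else None
  end.

Definition Aut : dfa2 Sig 'I_n := DFA2 x0 dlt (fun q => q == hst).

Lemma AT_plus T x : x \in AT T -> plus x.
Proof. by rewrite /AT mem_As => /andP[]. Qed.
Lemma BT_minus T x : x \in BT T -> ~~ plus x.
Proof. by rewrite /BT mem_Bs => /andP[]. Qed.

Lemma plus_head T d : plus d -> plus (head d (AT T)).
Proof. by case E: (AT T) => [|a A] //= _; apply: (@AT_plus T); rewrite E inE eqxx. Qed.

Lemma plus_x0 : plus x0.
Proof. exact: plus_head (plus_hst hn). Qed.

Lemma DDa q s r d : dlt q s = Some (r, d) -> plus r = d.
Proof.
case: s => [| |[T T']] /=.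
- by case: eqP => // _ [<- <-]; exact: plus_x0.
- by [].
case: ifP => // /andP[/andP[nT nT'] _].
rewrite /delta0; case: ifP => pq.
  case: ifP => // qA; case: ifP => jB [<- <-].
    by apply/negbTE/(@BT_minus T); rewrite mem_nth.
  exact: plus_head.
case: ifP => // qB [<- <-].
apply: (@AT_plus T'); rewrite mem_nth // size_ATBT // ltnS index_mem //.
Qed.

Lemma d0_plus T T' q r d : plus q -> delta0 T T' q = Some (r, d) ->
  q \in AT T /\
  (if index q (AT T) < size (BT T) then r = nth q (BT T) (index q (AT T)) /\ d = false
   else r = head q (AT T') /\ d = true).
Proof.
rewrite /delta0 => ->; case: ifP => // qA hd; split=> //; move: hd.
by case: ifP => _ [e1 e2]; subst.
Qed.

Lemma d0_minus T T' q r d : ~~ plus q -> delta0 T T' q = Some (r, d) ->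
  q \in BT T' /\ r = nth q (AT T') (index q (BT T')).+1 /\ d = true.
Proof.
rewrite /delta0 => /negbTE ->; case: ifP => // qB [e1 e2]; by subst.
Qed.

Lemma uniq_AT T : uniq (AT T). Proof. exact: uniq_As. Qed.
Lemma uniq_BT T : uniq (BT T). Proof. exact: uniq_Bs. Qed.

Lemma d0_A T T' j : node T -> j < size (BT T) ->
  delta0 T T' (nth hst (AT T) j) = Some (nth hst (BT T) j, false).
Proof.
move=> nT jB.
have jA : j < size (AT T) by rewrite size_ATBT // ltnS ltnW.
have mA : nth hst (AT T) j \in AT T by rewrite mem_nth.
rewrite /delta0 (AT_plus mA) mA index_uniq ?uniq_AT // jB.
by rewrite (set_nth_default hst).
Qed.

Lemma d0_tail T T' : node T -> node T' ->
  delta0 T T' (nth hst (AT T) (size (BT T))) = Some (head hst (AT T'), true).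
Proof.
move=> nT nT'.
have jA : size (BT T) < size (AT T) by rewrite size_ATBT.
have mA : nth hst (AT T) (size (BT T)) \in AT T by rewrite mem_nth.
rewrite /delta0 (AT_plus mA) mA index_uniq ?uniq_AT // ltnn.
by have := size_ATBT nT'; case: (AT T').
Qed.

Lemma d0_B T T' j : node T' -> j < size (BT T') ->
  delta0 T T' (nth hst (BT T') j) = Some (nth hst (AT T') j.+1, true).
Proof.
move=> nT' jB.
have mB : nth hst (BT T') j \in BT T' by rewrite mem_nth.
rewrite /delta0 (negbTE (BT_minus mB)) mB index_uniq ?uniq_BT //.
by rewrite (set_nth_default hst) // size_ATBT.
Qed.

Lemma DDAut : forall q s r d, delta Aut q s = Some (r, d) -> plus r = d.
Proof. exact: DDa. Qed.

Section Accepted.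
Variables (w : seq Sig) (K : nat) (f : 'I_n).
Hypothesis hK : run Aut w K = Some (f, (size w).+1).
Hypothesis hf : f == hst.

Local Notation vis := (vis Aut w K).
Definition visb q i := [exists t : 'I_K.+1, run Aut w t == Some (q, i)].
Lemma visbP q i : reflect (vis q i) (visb q i).
Proof.
apply: (iffP existsP) => [[t /eqP ht]|[t [tK ht]]].
  by exists t; split=> //; rewrite -ltnS ltn_ord.
by exists (Ordinal (tK : t < K.+1)); apply/eqP.
Qed.

Definition PL b (x : 'I_n) := plus x && visb x b.+1.
Definition NL b (x : 'I_n) := ~~ plus x && visb x b.
Definition KB b := keyP (PL b) (NL b).

Local Notation V1 := (V1 DDAut hK).
Local Notation V2 := (V2 DDAut plus_x0).
Local Notation FE := (FE DDAut plus_x0 hK).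
Local Notation VEnd := (VEnd hK).

Lemma filter_pred1_enum (a : 'I_n) (p : pred 'I_n) :
  (forall x, p x = (x == a)) -> [seq x <- enum 'I_n | p x] = [:: a].
Proof.
move=> hp; rewrite -(filter_pred1_uniq (enum_uniq 'I_n) (mem_enum _ a)).
by apply: eq_filter => x; rewrite hp.
Qed.

Lemma filter_pred0_enum (p : pred 'I_n) :
  (forall x, p x = false) -> [seq x <- enum 'I_n | p x] = [::].
Proof. by move=> hp; rewrite (eq_filter (a2 := pred0)) ?filter_pred0. Qed.

Lemma K_pos : 0 < K.
Proof. by case: K hK => // /= [] _. Qed.

Lemma KB0 : KB 0 = [:: val x0].
Proof.
rewrite /KB /keyP /As /Bs.
rewrite (@filter_pred1_enum x0); last first.
  move=> x; rewrite /PL andbA andbb; apply/idP/idP.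
    case/andP=> px /visbP vx.
    have [s [sy [vs [hsy hd]]]] := V2 vx isT.
    move: hsy hd; rewrite px /= => -[<-] /=.
    by case: eqP => // _ [->].
  move/eqP->; rewrite plus_x0 /=; apply/visbP; exists 1; split; first exact: K_pos.
  by rewrite /= /step /= eqxx.
rewrite (@filter_pred0_enum); first by [].
move=> x; rewrite /NL andbA andbb; apply/negbTE/negP => /andP[px /visbP vx].
have [sy [r [hsy [hd _]]]] := V1 vx (leq0n _).
move: hsy hd => [<-] /=; case: eqP => // ex _.
by rewrite ex plus_x0 in px.
Qed.

Lemma KBm : KB (size w) = [:: hh].
Proof.
rewrite /KB /keyP /As /Bs.
rewrite (@filter_pred1_enum hst); last first.
  move=> x; rewrite /PL andbA andbb; apply/idP/idP.
    case/andP=> px /visbP vx.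
    by rewrite (VEnd vx).
  move/eqP->; rewrite plus_hst /=; apply/visbP; exists K; split=> //.
  by rewrite hK (eqP hf).
rewrite (@filter_pred0_enum); first by [].
move=> x; rewrite /NL andbA andbb; apply/negbTE/negP => /andP[px /visbP vx].
have [s [sy [vs [hsy hd]]]] := V2 vx (introT orP (or_intror px)).
move: hsy hd; rewrite (negbTE px) tape_end => -[<-].
by [].
Qed.


Lemma tape_letter i : 0 < i <= size w -> exists c, tape w i = Some (Letter c).
Proof.
move=> hi; rewrite tape_mid //; case/andP: hi => i0 iw.
have iw' : i.-1 < size w by rewrite prednK.
by rewrite onthE (nth_map (set0, set0)) //; eexists.
Qed.

Lemma cell i : 0 < i <= size w -> Phi (KB i) <= (Phi (KB i.-1)).+1.
Proof.
move=> hi; have /andP[i0 iw] := hi.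
have [s [r [sy [hsy [vs [ps [hd vr]]]]]]] := FE hi.
have [[T T'] hc] := tape_letter hi.
rewrite hc in hsy; case: hsy => esy; subst sy.
move: hd; rewrite /= ; case: ifP => // gd hd.
have /andP[/andP[nT nT'] gP] := gd.
have V1c : forall q, vis q i -> exists r', delta0 T T' q = Some (r', plus r') /\
    vis r' (if plus r' then i.+1 else i.-1).
  move=> q vq; have [sy' [r' [hsy' [hd' [vr' _]]]]] := V1 vq iw.
  rewrite hc in hsy'; case: hsy' => <-{sy'} in hd'.
  by move: hd'; rewrite /= gd => hd'; exists r'.
have V2L : forall x, ~~ plus x -> vis x i.-1 -> exists s', vis s' i /\ delta0 T T' s' = Some (x, false).
  move=> x px vx; have [s' [sy' [vs' [hsy' hd']]]] := V2 vx (introT orP (or_intror px)).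
  move: vs' hsy' hd'; rewrite (negbTE px) prednK // hc => vs' [<-].
  by rewrite /= gd => hd'; exists s'.
have V2R : forall x, plus x -> vis x i.+1 -> exists s', vis s' i /\ delta0 T T' s' = Some (x, true).
  move=> x px vx; have [s' [sy' [vs' [hsy' hd']]]] := V2 vx isT.
  move: vs' hsy' hd'; rewrite px /= hc => vs' [<-].
  by rewrite /= gd => hd'; exists s'.
set A := AT T; set B := BT T; set A' := AT T'; set B' := BT T'.
have szA : size A = (size B).+1 by exact: size_ATBT.
have szA' : size A' = (size B').+1 by exact: size_ATBT.
have uA : uniq A by exact: uniq_AT.
have uB : uniq B by exact: uniq_BT.
have uA' : uniq A' by exact: uniq_AT.
have uB' : uniq B' by exact: uniq_BT.
have [sA [er idxs]] : s \in A /\ r = head hst A' /\ index s A = size B.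
  have [sA0 hh0] := d0_plus ps hd.
  move: hh0; case: ifP => hi1 [-> hdd] //; split=> //; split.
    by move: szA'; rewrite /A'; case: (AT T').
  have := index_mem s A; rewrite sA0 szA ltnS => hle.
  by apply/eqP; rewrite eqn_leq hle leqNgt hi1.
have es : s = nth hst A (size B) by rewrite -idxs nth_index.
set pL := PL i.-1; set nL := NL i.-1.
have pLE : forall x, pL x = plus x && visb x i by move=> x; rewrite /pL /PL prednK.
have pa : forall x, pL x -> x \in A.
  move=> x; rewrite pLE => /andP[px /visbP vx].
  have [r' [hd' _]] := V1c x vx.
  by have [] := d0_plus px hd'.
have nb : forall x, nL x -> x \in B.
  move=> x /andP[px /visbP vx].
  have [s' [vs' hd']] := V2L x px vx.
  case: (boolP (plus s')) => ps'.
    have [_] := d0_plus ps' hd'; case: ifP => hidx [-> hdd] //.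
    by rewrite mem_nth.
  by have [_ [_]] := d0_minus ps' hd'.
have pn : forall j, j < size B -> pL (nth hst A j) = nL (nth hst B j).
  move=> j jB.
  have mA : nth hst A j \in A by rewrite mem_nth // szA ltnS ltnW.
  have mB : nth hst B j \in B by rewrite mem_nth.
  apply/idP/idP.
    rewrite pLE => /andP[_ /visbP vx].
    have [r' [hd' vr']] := V1c _ vx.
    rewrite d0_A // in hd'; case: hd' => e1 e2.
    rewrite -e2 -e1 /= in vr'; rewrite /nL /NL (BT_minus mB) /=; exact/visbP.
  move=> hn'; have := nb _ hn'; move: hn' => /andP[px /visbP vx] _.
  have [s' [vs' hd']] := V2L _ px vx.
  case: (boolP (plus s')) => ps'; last by have [_ [_]] := d0_minus ps' hd'.
  have [sA' ] := d0_plus ps' hd'; case: ifP => hidx [e1 hdd] //.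
  have ej : index s' A = j.
    have e1' : nth hst B j = nth hst B (index s' A) by rewrite e1 (set_nth_default hst).
    by apply/eqP; rewrite -(nth_uniq hst hidx jB uB) e1' eqxx.
  have -> : nth hst A j = s' by rewrite -ej nth_index.
  by rewrite pLE ps'; apply/visbP.
have ptail : pL (nth hst A (size B)).
  by rewrite -es pLE ps; apply/visbP.
have mapL : map pL A = rcons (map nL B) true.
  apply: (@eq_from_nth _ false); first by rewrite size_map size_rcons size_map szA.
  move=> j; rewrite size_map szA ltnS => jB.
  rewrite (nth_map hst) ?szA ?ltnS // nth_rcons size_map.
  case: ltngtP jB => // [jB _|-> _]; last by rewrite ?eqxx ptail.
  by rewrite (nth_map hst) // pn.
have AsL : As pL = mask (map pL A) A.
  rewrite -filter_mask /A /AT /As -filter_predI; apply: eq_filter => x /=.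
  case: (boolP (pL x)) => [hx|hx]; last by rewrite andbF.
  by have := pa _ hx; rewrite /A /AT mem_As => /andP[-> ->].
have BsL : Bs nL = mask (map nL B) B.
  rewrite -filter_mask /B /BT /Bs filter_rev -filter_predI; congr rev; apply: eq_filter => x /=.
  case: (boolP (nL x)) => [hx|hx]; last by rewrite andbF.
  by have := nb _ hx; rewrite /B /BT mem_Bs => /andP[-> ->].
have leL : lexle (keyT T) (KB i.-1).
  rewrite /KB /keyP -/pL -/nL AsL BsL mapL /keyT -/A -/B !map_ilv !map_mask.
  apply: FL; rewrite ?size_map //.
  - exact: sorted_As.
  - exact: sorted_Bs.
set pR := PL i; set nR := NL i.
have pa' : forall x, pR x -> x \in A'.
  move=> x /andP[px /visbP vx].
  have [s' [vs' hd']] := V2R _ px vx.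
  case: (boolP (plus s')) => ps'.
    have [_] := d0_plus ps' hd'; case: ifP => _ [-> hdd] //.
    by move: szA'; rewrite /A'; case: (AT T') => //= a ? _; rewrite inE eqxx.
  have [sB' [-> _]] := d0_minus ps' hd'.
  by rewrite mem_nth // szA' ltnS index_mem.
have nb' : forall x, nR x -> x \in B'.
  move=> x /andP[px /visbP vx].
  have [r' [hd' _]] := V1c x vx.
  by have [] := d0_minus px hd'.
have pn' : forall j, j < size B' -> pR (nth hst A' j.+1) = nR (nth hst B' j).
  move=> j jB.
  have mA : nth hst A' j.+1 \in A' by rewrite mem_nth // szA'.
  have mB : nth hst B' j \in B' by rewrite mem_nth.
  apply/idP/idP; last first.
    move=> /andP[_ /visbP vx].
    have [r' [hd' vr']] := V1c _ vx.
    rewrite d0_B // in hd'; case: hd' => e1 e2.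
    rewrite -e2 -e1 /= in vr'; rewrite /pR /PL (AT_plus mA) /=; exact/visbP.
  move=> /andP[px /visbP vx].
  have [s' [vs' hd']] := V2R _ px vx.
  case: (boolP (plus s')) => ps'.
    have [_] := d0_plus ps' hd'; case: ifP => _ [e1 hdd] //.
    exfalso; move: e1; rewrite -/A'.
    have : (0 < size A') by rewrite szA'.
    case EA: A' => [|a1 A1] //= _ e1.
    have : nth hst A' j.+1 == nth hst A' 0 by rewrite EA /= e1.
    by rewrite nth_uniq // szA' // ltnS ltnW.
  have [sB' [e1 _]] := d0_minus ps' hd'.
  have ej : index s' B' = j.
    have : nth hst A' j.+1 == nth hst A' (index s' B').+1.
      by rewrite e1 (set_nth_default hst) // szA' ltnS index_mem.
    by rewrite nth_uniq // ?szA' ?ltnS ?index_mem // => /eqP [].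
  have -> : nth hst B' j = s' by rewrite -ej nth_index.
  by rewrite /nR /NL ps' /=; apply/visbP.
have phead : pR (head hst A').
  rewrite -er /pR /PL; apply/andP; split; last exact/visbP.
  by rewrite er; apply: plus_head; exact: plus_hst.
have [a1 [A1 [eA' szA1]]] : exists a1 A1, A' = a1 :: A1 /\ size A1 = size B'.
  by move: szA'; case: (A') => [|a1 A1] //= [e]; exists a1, A1.
have mapR : map pR A1 = map nR B'.
  apply: (@eq_from_nth _ false); first by rewrite !size_map szA1.
  move=> j; rewrite size_map szA1 => jB.
  rewrite !(nth_map hst) ?szA1 // -pn' //.
  by rewrite eA'.
have AsR : As pR = a1 :: mask (map nR B') A1.
  have -> : As pR = mask (map pR A') A'.
    rewrite -filter_mask /A' /AT /As -filter_predI; apply: eq_filter => x /=.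
    case: (boolP (pR x)) => [hx|hx]; last by rewrite andbF.
    by have := pa' _ hx; rewrite /A' /AT mem_As => /andP[-> ->].
  by rewrite eA' /= -mapR; move: phead; rewrite eA' /= => ->.
have BsR : Bs nR = mask (map nR B') B'.
  rewrite -filter_mask /B' /BT /Bs filter_rev -filter_predI; congr rev; apply: eq_filter => x /=.
  case: (boolP (nR x)) => [hx|hx]; last by rewrite andbF.
  by have := nb' _ hx; rewrite /B' /BT mem_Bs => /andP[-> ->].
have leR : lexle (KB i) (keyT T').
  rewrite /KB /keyP -/pR -/nR AsR BsR /keyT -/A' -/B' eA' !map_ilv /= !map_mask.
  apply: FR; rewrite ?size_map //.
  - by have := sorted_As (fun x : 'I_n => x \notin T'); rewrite -/(AT T') -/A' eA'.
  - exact: sorted_Bs.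
apply: (leq_trans (@Phi_mono n _ _ leR)); apply: (leq_trans gP).
by rewrite ltnS; apply: (@Phi_mono n).
Qed.


Lemma chain i : i <= size w -> Phi (KB i) <= i + Phi (KB 0).
Proof.
elim: i => [|i IH] // hi.
have := cell (i := i.+1); rewrite /= => /(_ (hi)) h.
by apply: leq_trans h _; rewrite addSn ltnS IH // ltnW.
Qed.

Lemma lower : Cn.-1 <= size w.
Proof.
have h := chain (leqnn _).
rewrite KBm KB0 in h.
have [nA0 PA0] := nodeAtP hn (Cn_pos hn).
have h0 : Phi [:: val x0] <= 0.
  rewrite -PA0; apply: (@Phi_mono n).
  have [rr ->] := @keyT_cons n hn _ hst nA0.
  by rewrite /= eqxx ltnn.
have := Phi_top hn; lia.
Qed.

End Accepted.

Lemma run_step (w : seq Sig) t c c' :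
  run Aut w t = Some c -> step Aut w c = Some c' -> run Aut w t.+1 = Some c'.
Proof. by move=> /= ->. Qed.

Definition LL := Cn.-1.
Definition w0 : seq Sig := [seq (nodeAt j, nodeAt j.+1) | j <- iota 0 LL].

Lemma size_w0 : size w0 = LL.
Proof. by rewrite size_map size_iota. Qed.

Lemma tape_w0 j : j < LL -> tape w0 j.+1 = Some (Letter (nodeAt j, nodeAt j.+1)).
Proof.
move=> jL; rewrite tape_mid ?size_w0 //=.
by rewrite onthE (nth_map (set0, set0)) ?size_w0 // (nth_map 0) ?size_iota // nth_iota.
Qed.

Lemma good_w0 j : j < LL -> good (nodeAt j) (nodeAt j.+1).
Proof.
move=> jL.
have jC : j < Cn by move: jL; rewrite /LL; lia.
have jC' : j.+1 < Cn by move: jL; rewrite /LL; lia.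
have [n1 p1] := nodeAtP hn jC; have [n2 p2] := nodeAtP hn jC'.
by rewrite /good n1 n2 p1 p2 leqnn.
Qed.

Lemma BT0 : size (BT (nodeAt 0)) = 0.
Proof.
have [n0 p0] := nodeAtP hn (Cn_pos hn).
have := size_ATBT n0.
case EA: (AT (nodeAt 0)) => [|a A] //= _.
case EB: (BT (nodeAt 0)) => [|b B] //=.
have pa : plus a by apply: (@AT_plus (nodeAt 0)); rewrite EA inE eqxx.
have := @Phi_lt_key n (Sing a) (keyT (nodeAt 0)) (node_Sing hn pa).
rewrite keyT_Sing // p0 /keyT EA EB /= eqxx ltnn /=.
by move/(_ isT).
Qed.

Lemma nodeAtL : nodeAt LL = Sing hst.
Proof.
have LC : LL < Cn by rewrite /LL prednK ?Cn_pos.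
have [nL pL] := nodeAtP hn LC.
apply: (@Phi_inj n) => //; first exact: (node_Sing hn (plus_hst hn)).
apply/eqP; rewrite eqn_leq pL; apply/andP; split.
  by rewrite /LL keyT_Sing ?(plus_hst hn) // Phi_top.
have h := @Phi_lt n hn (Sing hst) (node_Sing hn (plus_hst hn)).
by rewrite /LL -ltnS prednK ?(Cn_pos hn).
Qed.

Lemma sim j : j <= LL -> exists t, run Aut w0 t = Some (head hst (AT (nodeAt j)), j.+1).
Proof.
elim: j => [|j IH] jL.
  by exists 1; rewrite /= /step /= eqxx.
have jL' : j < LL by [].
have [t ht] := IH (ltnW jL').
have [nj _] := nodeAtP hn (leq_trans jL' (leq_pred _)).
have zig : forall r, r <= size (BT (nodeAt j)) ->
    exists t', run Aut w0 t' = Some (nth hst (AT (nodeAt j)) r, j.+1).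
  elim=> [|r IHr] rB; first by exists t; rewrite nth0.
  have [t' ht'] := IHr (ltnW rB).
  have h1 : run Aut w0 t'.+1 = Some (nth hst (BT (nodeAt j)) r, j).
    apply: (run_step ht'); rewrite /step tape_w0 //= good_w0 // d0_A //.
  case: j jL jL' IH ht nj IHr rB ht' h1 => [|j'] jL jL' IH ht nj IHr rB ht' h1.
    by rewrite BT0 in rB.
  exists t'.+2; apply: (run_step h1).
  have j'L : j' < LL by apply: ltn_trans jL'.
  by rewrite /step tape_w0 //= good_w0 // d0_B.
have [t' ht'] := zig _ (leqnn _).
exists t'.+1; apply: (run_step ht').
rewrite /step tape_w0 //= good_w0 // d0_tail //.
have jC : j.+1 < Cn by move: jL; rewrite /LL; have := Cn_pos hn; lia.
by have [] := nodeAtP hn jC.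
Qed.

Lemma acc_w0 : accepts Aut w0.
Proof.
have [t ht] := sim (leqnn _).
exists t, hst; split; last by rewrite unfold_in /= eqxx.
by rewrite size_w0 ht nodeAtL AT_Sing // (plus_hst hn).
Qed.

End Auto.

Theorem mainTheorem2 (n : nat) (hn : 2 <= n) :
  exists (Sigma : finType) (A : dfa2 Sigma 'I_n),
    direction_determinate A /\
    (exists w, accepts A w) /\
    (exists w, accepts A w /\ size w = 'C(n, n./2) - 1) /\
    (forall w, accepts A w -> 'C(n, n./2) - 1 <= size w).
Proof.
have hn' : 1 < n by [].
exists ({set 'I_n} * {set 'I_n})%type, (Aut hn').
have eC : 'C(n, n./2) - 1 = LL n by rewrite /LL (card_nodes n) subn1.
split; first by exists (@plus n); exact: DDAut.
split; first by exists (w0 n); exact: acc_w0.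
split; first by exists (w0 n); split; [exact: acc_w0 | rewrite size_w0 eC].
move=> w [k [q [hk hq]]].
rewrite eC /LL; apply: (lower (K:=k) (f:=q)) => //.
Qed.
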